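(* For each positive integer $n$, \[ 1 + \sum_{k=1}^{n} (-q)^k \left( \overline{{ n \brack k }}_{q,1} + \overline{{ n-1 \brack k-1 }}_{q,1} \right) = \sum_{ |j| \le \lfloor ( n+1 )/2 \rfloor } (-1)^j q^{j^2}. \]
   Context: An overpartition is a partition in which the last occurrence of each distinct part size may be overlined; its weight $|\lambda|$ is the sum of its parts. For integers $0\le k\le n$, $\overline{{n \brack k}}_{q,1}=\sum_{\lambda} q^{|\lambda|}$, the sum over all overpartitions $\lambda$ with largest part at most $n-k$ and at most $k$ parts. *)

(* Defs.v *)
From HB Require Import structures.
From mathcomp Require Import all_boot all_order all_algebra.
Set Implicit Arguments. Unset Strict Implicit. Unset Printing Implicit Defensive.
Import GRing.Theory Num.Theory.

(* An overpartition is encoded as the list of its parts in nonincreasing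
   order, each part paired with a flag saying whether it is overlined.
   Only the last occurrence of a part size may be overlined: an overlined
   entry must be followed (if at all) by a strictly smaller part. *)
Definition ovp_rel (x y : nat * bool) : bool :=
  (y.1 <= x.1) && (x.2 ==> (y.1 < x.1)).

Definition is_overpartition (s : seq (nat * bool)) : bool :=
  all (fun x => 0 < x.1) s && sorted ovp_rel s.

Definition ovp_weight (s : seq (nat * bool)) : nat := sumn (map fst s).

Definition ovp_of (m l : nat) (t : l.-tuple ('I_m.+1 * bool)) : seq (nat * bool) :=
  [seq (nat_of_ord x.1, x.2) | x <- t].

(* overline{[n brack k]}_{q,1}: generating function (polynomial in q = 'X)
   of overpartitions with largest part <= n - k and at most k parts.
   Such an overpartition with l parts corresponds to exactly one l-tuple
   of (part, flag) pairs with parts in 0..n-k. *)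
Definition ovbinom (n k : nat) : {poly int} :=
  \sum_(l < k.+1)
     \sum_(t : l.-tuple ('I_(n - k).+1 * bool) | is_overpartition (ovp_of t))
        'X^(ovp_weight (ovp_of t)).

(* Main.v *)
Require Import Defs.
From mathcomp Require Import all_boot all_order all_algebra zify ring.
Import GRing.Theory Num.Theory.
Local Open Scope ring_scope.

Fixpoint fp (l : nat) (c : nat) : {poly int} :=
  match l with
  | 0 => 1
  | l'.+1 => \sum_(a < c) 'X^(a.+1) * (fp l' a.+1 + fp l' a)
  end.

Lemma big_tuple_cons (T : finType) l (P : pred (l.+1.-tuple T))
   (F : l.+1.-tuple T -> {poly int}) :
  \sum_(t | P t) F t =
  \sum_(x : T) \sum_(t : l.-tuple T | P (cons_tuple x t)) F (cons_tuple x t).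
Proof.
rewrite pair_big_dep /=.
rewrite (reindex (fun p : T * l.-tuple T => cons_tuple p.1 p.2)) /=.
  by apply: eq_bigl => p.
exists (fun t => (thead t, behead_tuple t)) => [[x t] _|t _] /=.
  by congr pair; apply: val_inj.
by apply: val_inj; rewrite /= [in RHS](tuple_eta t).
Qed.

Lemma ovp_rel_trans : transitive ovp_rel.
Proof.
move=> [y yb] [x xb] [z zb]; rewrite /ovp_rel /=.
case: xb; case: yb => /=; lia.
Qed.

Lemma ovp_cons (c a : nat) (b : bool) s :
  is_overpartition ((a, b) :: s) && all (fun x => x.1 <= c)%N ((a, b) :: s) =
  (0 < a <= c)%N && (is_overpartition s && all (fun x => x.1 <= a - b)%N s).
Proof.
rewrite /is_overpartition /= path_sortedE; last exact: ovp_rel_trans.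
case: a => [|a] //=.
have E : all (ovp_rel (a.+1, b)) s = all (fun x => x.1 <= a.+1 - b)%N s.
  apply: eq_all => -[z zb]; rewrite /ovp_rel /=.
  by case: b => /=; apply/idP/idP; lia.
rewrite E.
case: (boolP (a < c)%N) => Hac /=; last by rewrite !andbF.
case Hall: (all (fun x => x.1 <= a.+1 - b)%N s); rewrite /= ?andbF //.
have -> : all (fun x => x.1 <= c)%N s.
  apply: sub_all Hall => z /=; lia.
by rewrite !andbT andbC.
Qed.

Definition Ssum (M l c : nat) : {poly int} :=
  \sum_(t : l.-tuple ('I_M.+1 * bool) |
      is_overpartition (ovp_of t) && all (fun x => x.1 <= c)%N (ovp_of t))
    'X^(ovp_weight (ovp_of t)).

Lemma sum_ord_cond (M c : nat) (G : nat -> {poly int}) : (c <= M)%N ->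
  \sum_(a < M.+1 | (0 < a <= c)%N) G a = \sum_(a < c) G a.+1.
Proof.
move=> cM.
rewrite big_mkcond big_ord_recl /= add0r.
rewrite (big_ord_widen M (fun a => G a.+1) cM) [RHS]big_mkcond /=.
by apply: eq_bigr => i _.
Qed.

Lemma Ssum_fp M l : forall c, (c <= M)%N -> Ssum M l c = fp l c.
Proof.
elim: l => [|l IH] c cM.
  rewrite /Ssum (big_pred1 [tuple]) //= => t.
  by rewrite tuple0 /= eqxx.
rewrite /Ssum big_tuple_cons /=.
transitivity (\sum_(x : 'I_M.+1 * bool)
   (if (0 < x.1 <= c)%N then 'X^(x.1) * Ssum M l (x.1 - x.2) else 0)).
  apply: eq_bigr => -[a b] _ /=.
  under eq_bigl => t do rewrite [ovp_of _]/= ovp_cons.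
  case: ifP => H; last by rewrite big_pred0.
  rewrite /Ssum mulr_sumr; apply: eq_bigr => t _.
  by rewrite /ovp_weight /= exprD.
rewrite -(pair_bigA _ (fun (a : 'I_M.+1) (b : bool) => if (0 < a <= c)%N then 'X^a * Ssum M l (a - b) else 0)) /=.
rewrite [RHS]/= -(@sum_ord_cond M c (fun a => 'X^a * (fp l a + fp l a.-1)) cM).
rewrite [RHS]big_mkcond /=. apply: eq_bigr => a _.
rewrite big_bool /=.
case: ifP => [/andP[a0 ac]|_]; last by rewrite addr0.
rewrite !IH; try lia.
by rewrite subn1 subn0 mulrDr addrC.
Qed.

Definition g (c K : nat) : {poly int} := \sum_(l < K.+1) fp l c.

Lemma ovbinom_g n k : ovbinom n k = g (n - k) k.
Proof.
rewrite /ovbinom /g; apply: eq_bigr => l _.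
rewrite -(@Ssum_fp (n - k) l (n - k) (leqnn _)) /Ssum.
apply: eq_bigl => t; rewrite [X in _ && X](_ : _ = true) ?andbT //.
apply/allP => -[x b] /mapP [[y yb] _ [-> _]] /=.
by rewrite -ltnS ltn_ord.
Qed.

Lemma fp0 c : fp 0 c = 1. Proof. by []. Qed.
Lemma fpS0 l : fp l.+1 0 = 0. Proof. by rewrite /= big_ord0. Qed.
Lemma fpSS l c : fp l.+1 c.+1 = fp l.+1 c + 'X^(c.+1) * (fp l c.+1 + fp l c).
Proof. by rewrite /= big_ord_recr. Qed.
Arguments fp : simpl never.

Lemma g0K K : g 0 K = 1.
Proof. by rewrite /g big_ord_recl big1 ?addr0 // => i _; rewrite fpS0. Qed.
Lemma gc0 c : g c 0 = 1.
Proof. by rewrite /g big_ord1. Qed.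

Lemma gS c K : g c K.+1 = 1 + \sum_(i < K.+1) fp i.+1 c.
Proof. by rewrite /g big_ord_recl. Qed.

Lemma Mrec c K : g c.+1 K.+1 = g c K.+1 + 'X^(c.+1) * (g c.+1 K + g c K).
Proof.
rewrite !gS -addrA; congr (_ + _).
under eq_bigr => i _ do rewrite fpSS.
by rewrite big_split /= -!mulr_sumr big_split.
Qed.

Lemma Kf l : forall c, fp l.+1 c.+1 = 'X^(l.+1) * (g c l.+1 + g c l).
Proof.
elim: l => [|l IHl] c; elim: c => [|c IHc].
- by rewrite fpSS fpS0 !g0K !fp0 add0r.
- rewrite fpSS IHc (Mrec c 0) !gc0 !fp0.
  rewrite (exprS _ c.+1); move: ('X^(c.+1)) => a; move: (g c 1) => b. ring.
- by rewrite fpSS fpS0 IHl !g0K add0r fpS0 addr0 (exprS _ l.+1) mulrA.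
- rewrite fpSS IHc !IHl (Mrec c l.+1) (Mrec c l).
  rewrite !exprS.
  move: ('X^c) ('X^l) (g c l.+2) (g c l.+1) (g c l) (g c.+1 l) (g c.+1 l.+1) => a b u v w x y.
  ring.
Qed.

Lemma Krec c K : g c.+1 K.+1 = g c.+1 K + 'X^(K.+1) * (g c K.+1 + g c K).
Proof. by rewrite /g big_ord_recr /= Kf. Qed.

Definition P n := \sum_(k < n.+1) (- 'X) ^+ k * g (n - k) k.
Definition Z n := \sum_(k < n.+1) (-1) ^+ k * g (n - k) k.

Lemma big3 (F : nat -> {poly int}) n :
  \sum_(k < n.+2) F k = F 0%N + \sum_(i < n) F i.+1 + F n.+1.
Proof. by rewrite big_ord_recl big_ord_recr /= addrA. Qed.

Lemma lemA n : P n.+2 = P n.+1 - 'X^(n.+2) * (Z n.+1 + Z n).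
Proof.
have e1 : P n.+2 = 1 + \sum_(i < n.+1) (-'X)^+i.+1 * g (n.+1 - i) i.+1 + (-'X)^+n.+2.
  rewrite /P (big3 (fun k => (-'X)^+k * g (n.+2 - k) k) n.+1) subn0 gc0 expr0 mul1r subnn g0K mulr1.
  by congr (_ + _ + _); apply: eq_bigr => i _; rewrite subSS.
have e2 : P n.+1 = 1 + \sum_(i < n.+1) (-'X)^+i.+1 * g (n - i) i.+1.
  by rewrite /P big_ord_recl subn0 gc0 expr0 mul1r.
have e3 : Z n.+1 = \sum_(i < n.+1) (-1)^+i * g (n.+1 - i) i + (-1)^+n.+1.
  by rewrite /Z big_ord_recr /= subnn g0K mulr1.
have e4 : \sum_(i < n.+1) (-'X)^+i.+1 * g (n.+1 - i) i.+1 =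
   \sum_(i < n.+1) (-'X)^+i.+1 * g (n - i) i.+1 -
   'X^(n.+2) * (\sum_(i < n.+1) (-1)^+i * g (n.+1 - i) i + Z n).
  rewrite /Z -big_split mulr_sumr -sumrB; apply: eq_bigr => i _.
  have Hi : (i <= n)%N by rewrite -ltnS ltn_ord.
  rewrite (subSn Hi) Mrec.
  have -> : n.+2 = (i.+1 + (n - i).+1)%N by lia.
  rewrite exprD (exprNn 'X) (exprS (-1) i).
  move: ('X^(i.+1)) ('X^((n - i).+1)) ((-1)^+i) (g (n - i) i.+1) (g (n - i).+1 i) (g (n - i) i) => a b c u v w.
  simpl; ring.
rewrite e1 e2 e3 e4 (exprNn 'X n.+2) (exprS (-1) n.+1).
move: ('X^(n.+2)) ((-1)^+n.+1) (\sum_(i < n.+1) (-'X)^+i.+1 * g (n - i) i.+1) (\sum_(i < n.+1) (-1)^+i * g (n.+1 - i) i) (Z n) => a b c u v.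
ring.
Qed.

Lemma lemA0 : P 1 = P 0 - 'X * Z 0.
Proof.
rewrite /P /Z !big_ord_recr !big_ord0 /= !add0r gc0 g0K.
by rewrite !expr0 expr1 subn0 gc0 !mul1r !mulr1.
Qed.

Lemma lemB n : Z n.+2 + Z n.+1 = P n.+1 - 'X * P n.
Proof.
have e1 : Z n.+2 = 1 + \sum_(i < n.+1) (-1)^+i.+1 * g (n.+1 - i) i.+1 + (-1)^+n.+2.
  rewrite /Z (big3 (fun k => (-1)^+k * g (n.+2 - k) k) n.+1) subn0 gc0 expr0 mul1r subnn g0K mulr1.
  by congr (_ + _ + _); apply: eq_bigr => i _; rewrite subSS.
have e2 : P n.+1 = 1 + \sum_(i < n.+1) (-'X)^+i.+1 * g (n - i) i.+1.
  by rewrite /P big_ord_recl subn0 gc0 expr0 mul1r.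
have e3 : Z n.+1 = \sum_(i < n.+1) (-1)^+i * g (n.+1 - i) i + (-1)^+n.+1.
  by rewrite /Z big_ord_recr /= subnn g0K mulr1.
have e4 : \sum_(i < n.+1) (-1)^+i.+1 * g (n.+1 - i) i.+1 =
   - \sum_(i < n.+1) (-1)^+i * g (n.+1 - i) i
   + \sum_(i < n.+1) (-'X)^+i.+1 * g (n - i) i.+1 - 'X * P n.
  rewrite /P mulr_sumr -sumrN -big_split -sumrB; apply: eq_bigr => i _.
  have Hi : (i <= n)%N by rewrite -ltnS ltn_ord.
  rewrite (subSn Hi) Krec (exprNn 'X i.+1) (exprNn 'X i) (exprS (-1) i) (exprS 'X i).
  move: ('X^i) ((-1)^+i) (g (n - i) i.+1) (g (n - i).+1 i) (g (n - i) i) => a c u v w.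
  simpl; ring.
rewrite e1 e2 e3 e4 (exprS (-1) n.+1).
move: ((-1)^+n.+1) (\sum_(i < n.+1) (-'X)^+i.+1 * g (n - i) i.+1) (\sum_(i < n.+1) (-1)^+i * g (n.+1 - i) i) (P n) => b c u v.
ring.
Qed.

Lemma lemB0 : Z 1 + Z 0 = P 0.
Proof.
rewrite /P /Z !big_ord_recr !big_ord0 /= !add0r gc0 g0K.
by rewrite !expr0 expr1 subn0 gc0 !mul1r !mulr1 addrN add0r.
Qed.

Definition Lp n := if n is m.+1 then P m.+1 - 'X * P m else 1.

Lemma P0 : P 0 = 1.
Proof. by rewrite /P big_ord1 /= gc0 expr0 mulr1. Qed.
Lemma Z0 : Z 0 = 1.
Proof. by rewrite /Z big_ord1 /= gc0 expr0 mulr1. Qed.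

Lemma LpZ n : Lp n = Z n.+1 + Z n.
Proof. by case: n => [|n]; rewrite ?lemB0 ?P0 ?lemB. Qed.

Lemma Lrec n : Lp n.+3 = Lp n.+2 - 'X^(n.+3) * (Lp n.+1 - Lp n).
Proof.
rewrite (LpZ n.+1) (LpZ n) /= (lemA n.+1) (lemA n) (exprS _ n.+2).
move: ('X^(n.+2)) (P n.+1) (Z n.+2) (Z n.+1) (Z n) => a b u v w.
ring.
Qed.

Lemma Lp1 : Lp 1 = 1 - 'X *+ 2.
Proof. rewrite /= lemA0 P0 Z0. move: ('X : {poly int}) => a. rewrite mulr2n. ring. Qed.

Lemma Lp2 : Lp 2 = Lp 1.
Proof.
rewrite /= (lemA 0) lemB0 lemA0 P0 Z0 !mulr1 expr2.
move: ('X : {poly int}) => a. ring.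
Qed.

Definition Fk (k : nat) : {poly int} := (-1) ^+ k * 'X^(k ^ 2).
Definition T m := Fk 0 + \sum_(j < m) Fk j.+1 *+ 2.

Lemma TS m : T m.+1 = T m + Fk m.+1 *+ 2.
Proof. by rewrite /T big_ord_recr addrA. Qed.

Lemma Lmain j : [/\ Lp (2 * j) = T j, Lp (2 * j).+1 = T j.+1 & Lp (2 * j).+2 = T j.+1].
Proof.
elim: j => [|j [IH0 IH1 IH2]].
  rewrite muln0 Lp2 Lp1 TS /T big_ord0 /Fk addr0 /=.
  by rewrite expr0 mul1r expr1 mulN1r mulNrn.
have E : (2 * j.+1 = (2 * j).+2)%N by lia.
have E3 : Lp (2 * j).+3 = T j.+2.
  rewrite Lrec IH0 IH1 IH2 (TS j.+1) (TS j) /Fk.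
  have -> : ((j.+2) ^ 2 = (2 * j).+3 + (j.+1) ^ 2)%N by rewrite !expnS expn0; lia.
  rewrite exprD (exprS (-1) j.+1).
  move: ('X^((2 * j).+3)) ('X^((j.+1)^2)) ((-1) ^+ j.+1) (T j) => a b c t.
  rewrite !mulr2n. ring.
rewrite E; split => //.
by rewrite (Lrec (2 * j).+1) E3 IH2 IH1 subrr mulr0 subr0.
Qed.

Lemma sym_sum (F : nat -> {poly int}) m :
  \sum_(i < (2 * m).+1) F `|(i%:Z - m%:Z)%R|%N = F 0%N + \sum_(j < m) F j.+1 *+ 2.
Proof.
elim: m => [|m IH]; first by rewrite big_ord1 big_ord0 !addr0.
have -> : ((2 * m.+1).+1 = ((2 * m).+1).+2)%N by lia.
rewrite (big3 (fun i => F `|(i%:Z - m.+1%:Z)%R|%N) (2 * m).+1).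
rewrite (big_ord_recr m (fun j => F j.+1 *+ 2)) /=.
have -> : \sum_(i < (2 * m).+1) F `|(i.+1%:Z - m.+1%:Z)%R|%N =
          \sum_(i < (2 * m).+1) F `|(i%:Z - m%:Z)%R|%N.
  apply: eq_bigr => i _.
  by have -> : (i.+1%:Z - m.+1%:Z = i%:Z - m%:Z)%R by lia.
rewrite IH subn0.
have -> : (((2 * m).+2)%:Z - m.+1%:Z = m.+1%:Z)%R by lia.
rewrite /= !mulr2n.
move: (F m.+1) (F 0%N) (\sum_(i < m) (F i.+1 + F i.+1)) => a b c.
ring.
Qed.

Lemma final_lhs m :
  1 + \sum_(1 <= k < m.+2) (- 'X) ^+ k * (ovbinom m.+1 k + ovbinom m.+1.-1 k.-1)
  = Lp m.+1.
Proof.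
rewrite big_add1 /= big_mkord /Lp.
have e2 : P m.+1 = 1 + \sum_(i < m.+1) (-'X)^+i.+1 * g (m - i) i.+1.
  by rewrite /P big_ord_recl subn0 gc0 expr0 mul1r.
rewrite e2 -addrA; congr (_ + _).
under eq_bigr => i _ do rewrite !ovbinom_g subSS mulrDr.
rewrite big_split /=; congr (_ + _).
rewrite /P mulr_sumr -sumrN; apply: eq_bigr => i _.
by rewrite exprS mulNr mulrA mulNr.
Qed.

Theorem corollary1p4 (n : nat) : (0 < n)%N ->
  1 + \sum_(1 <= k < n.+1) (- 'X) ^+ k * (ovbinom n k + ovbinom n.-1 k.-1)
  = \sum_(i < (2 * (n.+1 %/ 2)).+1)
      (let j : int := (i%:Z - (n.+1 %/ 2)%:Z)%R in
       (-1) ^+ `|j|%N * 'X^(`|j|%N ^ 2)) :> {poly int}.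
Proof.
case: n => [//|m] _.
rewrite final_lhs (sym_sum Fk).
have [j [Hj|Hj]] : exists j, (m.+1 = 2 * j \/ m.+1 = (2 * j).+1)%N.
  by exists (m.+1 %/ 2)%N; lia.
- have -> : (m.+2 %/ 2 = j)%N by lia.
  by rewrite Hj; case: (Lmain j).
- have -> : (m.+2 %/ 2 = j.+1)%N by lia.
  by rewrite Hj; case: (Lmain j).
Qed.
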